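(* Let $K=\mathbb{Q}(\rho)$, where $\rho$ is a root of $x^3-ax^2-(a+3)x-1$ with $a\equiv3$ or $21\pmod{27}$, $a>12$ and $\frac{a^2+3a+9}{27}$ square-free. Put $g_1=1$, $g_2=\rho$, $g_3=\frac{1+\rho+\rho^2}{3}$ and, for integers $v,r$, \[\alpha(v,r)=-(2v+1)g_1-(v(a+3)+r+1)g_2+(3v+2)g_3.\] Then: \begin{enumerate} \item $N(\alpha(v,r))<N(\alpha(v+1,r))$ for all $0\leq v\leq\frac{a-3}{9}-1$ and $\frac{a}{3}+2+v\leq r\leq\frac{2a}{3}-2v-3$; \item $N(\alpha(v,\frac{a}{3}+1+v))<N(\alpha(v+1,\frac{a}{3}+1+v+1))$ for all $0\leq v\leq\frac{a-3}{9}-1$; \item $N(\alpha(v,\frac{2a}{3}-2v-1))<N(\alpha(v+1,\frac{2a}{3}-2(v+1)-1))$ for all $0\leq v\leq\frac{a-3}{9}-2$; \item $N(\alpha(v,\frac{2a}{3}-2v-2))<N(\alpha(v+1,\frac{2a}{3}-2(v+1)-2))$ for all $0\leq v\leq\frac{a-3}{9}-2$. \end{enumerate}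
   Context: $N$ denotes the norm from $K$ to $\mathbb{Q}$. Note that the hypotheses imply $a\equiv 3\pmod 9$, so $\frac{a}{3}$ and $\frac{a-3}{9}$ are integers. *)

(* Defs.v *)
From HB Require Import structures.
From mathcomp Require Import all_boot all_order all_algebra.
Set Implicit Arguments. Unset Strict Implicit. Unset Printing Implicit Defensive.
Import Order.TTheory GRing.Theory Num.Theory.
Local Open Scope ring_scope.

Definition fpoly (a : int) : {poly rat} :=
  'X^3 - (a%:~R) *: 'X^2 - ((a + 3)%:~R) *: 'X - 1.

(* Matrix (row convention) of multiplication by rho on K = Q[x]/(fpoly a)
   in the Q-basis (1, rho, rho^2): rho*1 = rho, rho*rho = rho^2,
   rho*rho^2 = 1 + (a+3) rho + a rho^2.  This is the companion matrix of
   fpoly a (= companionmx [:: -1; -(a+3); -a; 1]). *)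
Definition Mrho (a : int) : 'M[rat]_3 :=
  \matrix_(i < 3, j < 3)
    if (i == 2%N :> nat)
    then [:: 1; (a + 3)%:~R; a%:~R]`_j
    else ((i.+1 == j :> nat)%:R : rat).

(* Norm N_{K/Q} of the element p(rho) of K, p in Q[x]: the determinant of
   the Q-linear map "multiplication by p(rho)" on K. *)
Definition normK (a : int) (p : {poly rat}) : rat :=
  \det (horner_mx (Mrho a) p).

Definition g1 : {poly rat} := 1.
Definition g2 : {poly rat} := 'X.
Definition g3 : {poly rat} := 3^-1 *: (1 + 'X + 'X^2).

Definition alpha (a v r : int) : {poly rat} :=
  - ((2 * v + 1)%:~R) *: g1 - ((v * (a + 3) + r + 1)%:~R) *: g2
  + ((3 * v + 2)%:~R) *: g3.

Definition squarefree_int (n : int) : Prop :=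
  forall d : int, (d * d %| n)%Z -> `|d| = 1.

(* Main.v *)
Require Import Defs.
From HB Require Import structures.
From mathcomp Require Import all_boot all_order all_algebra.
From mathcomp Require Import zify ring.
Import Order.TTheory GRing.Theory Num.Theory.
Local Open Scope ring_scope.

Lemma det3 (R : comNzRingType) (f : nat -> nat -> R) :
  \det (\matrix_(i < 3, j < 3) f i j) =
  f 0 0 * (f 1 1 * f 2 2 - f 1 2 * f 2 1)
  - f 0 1 * (f 1 0 * f 2 2 - f 1 2 * f 2 0)
  + f 0 2 * (f 1 0 * f 2 1 - f 1 1 * f 2 0).
Proof.
rewrite (expand_det_row _ 0) !big_ord_recl big_ord0 /cofactor.
rewrite !(expand_det_row _ 0) !big_ord_recl !big_ord0 /cofactor.
rewrite !det_mx11 !mxE /bump /=.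
ring.
Qed.
Definition fm (c0 c1 c2 A : rat) (i j : nat) : rat :=
   match i, j with
   | O, O => c0 | O, S O => c1 | O, _ => c2
   | S O, O => c2 | S O, S O => c0 + c2 * (A + 3) | S O, _ => c1 + c2 * A
   | _, O => c1 + c2 * A | _, S O => c1 * (A + 3) + c2 * (1 + A * (A + 3))
   | _, _ => c0 + c1 * A + c2 * (A ^+ 2 + A + 3) end.
Lemma hm (a v r : int) : horner_mx (Mrho a) (alpha a v r) = 
  let A : rat := a%:~R in
  let x : rat := (2 * v + 1)%:~R in
  let y : rat := (v * (a + 3) + r + 1)%:~R in
  let z : rat := (3 * v + 2)%:~R / 3 in
  \matrix_(i < 3, j < 3) fm (z - x) (z - y) z A i j.
Proof.
rewrite /alpha /g1 /g2 /g3; move: ((2 * v + 1)%:~R) ((v * (a + 3) + r + 1)%:~R) ((3 * v + 2)%:~R) => x y z. rewrite -!mul_polyC !(rmorphD, rmorphN, rmorphM, rmorph1, rmorphXn) /= !horner_mx_C !horner_mx_X.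
rewrite mulr1 -!mulmxE !mul_scalar_mx.
apply/matrixP => i j; rewrite !mxE !big_ord_recl big_ord0 !mxE.
case: i => [[|[|[|i]]] Hi] //; case: j => [[|[|[|j]]] Hj] //=.
all: rewrite /fm /=.
all: rewrite ?intrD; ring.
Qed.
Lemma D1pos (k v r : int) : 2 <= k -> 0 <= v <= k-1 -> 3*k+3+v <= r <= 6*k-1-2*v ->
 0 < (-162)*k*k*k + (54)*k*k*v + (81)*k*k*r + (-198)*k*k + (-18)*k*v*r + (36)*k*v + (-9)*k*r*r + (72)*k*r + (-90)*k + (3)*v*v + (-6)*v*r + (9)*v + (-6)*r*r + (18)*r + (-14).
Proof.
move=> Hk Hv Hr.
have Hv2 : v <= k - 2 by lia.
have HW : 0 < 3*k-4-3*v by lia.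
have H1 : 0 <= k * (v * (k - v - 2)) by apply: mulr_ge0; [lia| apply: mulr_ge0; lia].
have HL : 0 < 27*k*k*v + 45*k*k - 27*k*v*v - 54*k*v - 9*k - 9*v*v - 27*v - 14 by nia.
have HE : 0 < 45*k*k - 18*k*v - 9*v*v + 9*k - 45*v - 38 by nia.
set L := 27*k*k*v + 45*k*k - 27*k*v*v - 54*k*v - 9*k - 9*v*v - 27*v - 14 in HL.
set E := 45*k*k - 18*k*v - 9*v*v + 9*k - 45*v - 38 in HE.
set D := (X in 0 < X).
have Hid : (3*k-4-3*v) * D = L * (6*k-1-2*v-r) + E * (r-(3*k+3+v)) + (3*k-4-3*v)*(9*k+6)*((r-(3*k+3+v))*(6*k-1-2*v-r)).
  rewrite /D /L /E; ring.
have P1 : 0 <= L * (6*k-1-2*v-r) by apply: mulr_ge0; lia.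
have P2 : 0 <= E * (r-(3*k+3+v)) by apply: mulr_ge0; lia.
have P3 : 0 <= (3*k-4-3*v)*(9*k+6)*((r-(3*k+3+v))*(6*k-1-2*v-r)).
  by apply: mulr_ge0; [apply: mulr_ge0; lia | apply: mulr_ge0; lia].
have : 0 < (3*k-4-3*v) * D.
  rewrite Hid.
  have [Hr1|Hr1] : r = 3*k+3+v \/ 3*k+3+v < r by lia.
    have P4 : 0 < L * (6*k-1-2*v-r) by apply: mulr_gt0; lia.
    lia.
  have P4 : 0 < E * (r-(3*k+3+v)) by apply: mulr_gt0; lia.
  lia.
by rewrite pmulr_rgt0.
Qed.
Lemma D2pos (k v : int) : 2 <= k -> 0 <= v <= k-1 -> 0 < (54)*k*k*v + (54)*k*k + (-54)*k*v*v + (-54)*k*v + (-27)*v*v + (-45)*v + (-18).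
Proof. move=> Hk Hv.
have H1 : 0 <= k * (v * (k - v - 1)) by apply: mulr_ge0; [lia| apply: mulr_ge0; lia].
nia. Qed.
Lemma D3pos (k v : int) : 2 <= k -> 0 <= v <= k-2 -> 0 < (54)*k*k*v + (81)*k*k + (-54)*k*v*v + (-108)*k*v + (-45)*k + (-27)*v*v + (-63)*v + (-36).
Proof. move=> Hk Hv.
have H1 : 0 <= k * (v * (k - v - 2)) by apply: mulr_ge0; [lia| apply: mulr_ge0; lia].
nia. Qed.
Lemma D4pos (k v : int) : 2 <= k -> 0 <= v <= k-2 -> 0 < (54)*k*k*v + (108)*k*k + (-54)*k*v*v + (-162)*k*v + (-108)*k + (-27)*v*v + (-81)*v + (-54).
Proof. move=> Hk Hv.
have H1 : 0 <= k * (v * (k - v - 2)) by apply: mulr_ge0; [lia| apply: mulr_ge0; lia].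
nia. Qed.

Lemma normKE (a v r : int) : normK a (alpha a v r) =
  let A : rat := a%:~R in
  let x : rat := (2 * v + 1)%:~R in
  let y : rat := (v * (a + 3) + r + 1)%:~R in
  let z : rat := (3 * v + 2)%:~R / 3 in
  let f := fm (z - x) (z - y) z A in
  f 0 0 * (f 1 1 * f 2 2 - f 1 2 * f 2 1)
  - f 0 1 * (f 1 0 * f 2 2 - f 1 2 * f 2 0)
  + f 0 2 * (f 1 0 * f 2 1 - f 1 1 * f 2 0).
Proof. by rewrite /normK hm det3. Qed.

Lemma cmp_lt (x y : rat) (d : int) : y - x = d%:~R -> 0 < d -> x < y.
Proof. by move=> E Hd; rewrite -subr_gt0 E ltr0z. Qed.

Theorem lemma7p3 (a : int) :
  ((a %% 27)%Z = 3 \/ (a %% 27)%Z = 21) ->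
  12 < a ->
  squarefree_int ((a ^+ 2 + 3 * a + 9) %/ 27)%Z ->
  [/\ (forall v r : int,
         0 <= v <= ((a - 3) %/ 9)%Z - 1 ->
         (a %/ 3)%Z + 2 + v <= r <= ((2 * a) %/ 3)%Z - 2 * v - 3 ->
         normK a (alpha a v r) < normK a (alpha a (v + 1) r)),
      (forall v : int,
         0 <= v <= ((a - 3) %/ 9)%Z - 1 ->
         normK a (alpha a v ((a %/ 3)%Z + 1 + v))
           < normK a (alpha a (v + 1) ((a %/ 3)%Z + 1 + v + 1))),
      (forall v : int,
         0 <= v <= ((a - 3) %/ 9)%Z - 2 ->
         normK a (alpha a v (((2 * a) %/ 3)%Z - 2 * v - 1))
           < normK a (alpha a (v + 1) (((2 * a) %/ 3)%Z - 2 * (v + 1) - 1))) &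
      (forall v : int,
         0 <= v <= ((a - 3) %/ 9)%Z - 2 ->
         normK a (alpha a v (((2 * a) %/ 3)%Z - 2 * v - 2))
           < normK a (alpha a (v + 1) (((2 * a) %/ 3)%Z - 2 * (v + 1) - 2)))].

Proof.
move=> Hmod Ha12 _.
set k := ((a - 3) %/ 9)%Z.
have Ha : a = 9 * k + 3 by rewrite /k; lia.
have Hk : 2 <= k by lia.
have Hd3 : (a %/ 3)%Z = 3 * k + 1 by rewrite Ha; lia.
have Hd23 : ((2 * a) %/ 3)%Z = 6 * k + 2 by rewrite Ha; lia.
rewrite Hd3 Hd23.
split.
- move=> v r Hv Hr.
  apply: (@cmp_lt _ _ ((-162)*k*k*k + (54)*k*k*v + (81)*k*k*r + (-198)*k*k + (-18)*k*v*r + (36)*k*v + (-9)*k*r*r + (72)*k*r + (-90)*k + (3)*v*v + (-6)*v*r + (9)*v + (-6)*r*r + (18)*r + (-14))).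
    rewrite !normKE /fm /= Ha; field; by [].
  apply: D1pos; lia.
- move=> v Hv.
  apply: (@cmp_lt _ _ ((54)*k*k*v + (54)*k*k + (-54)*k*v*v + (-54)*k*v + (-27)*v*v + (-45)*v + (-18))).
    rewrite !normKE /fm /= Ha; field; by [].
  apply: D2pos; lia.
- move=> v Hv.
  apply: (@cmp_lt _ _ ((54)*k*k*v + (81)*k*k + (-54)*k*v*v + (-108)*k*v + (-45)*k + (-27)*v*v + (-63)*v + (-36))).
    rewrite !normKE /fm /= Ha; field; by [].
  apply: D3pos; lia.
- move=> v Hv.
  apply: (@cmp_lt _ _ ((54)*k*k*v + (108)*k*k + (-54)*k*v*v + (-162)*k*v + (-108)*k + (-27)*v*v + (-81)*v + (-54))).
    rewrite !normKE /fm /= Ha; field; by [].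
  apply: D4pos; lia.
Qed.
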